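(* Let $d\ge1$ and $L\ge2$ be integers, $\alpha\ge0$, $\delta\ge 0$, and let $W_1,\dots,W_{L-1}\in\mathbb{R}^{d\times d}$ satisfy $\|W_l\|_2\le\alpha$ for $l=1,\dots,L-1$ and $\|W_{l+1}^\intercal W_{l+1}-W_lW_l^\intercal\|_2\le\delta$ for $l=1,\dots,L-2$. Then $$\left\|W_{L-1:1}W_{L-1:1}^\intercal-\left(W_{L-1}W_{L-1}^\intercal\right)^{L-1}\right\|_2\le\frac12L^2\alpha^{2(L-2)}\delta.$$
   Context: $W_{L-1:1}=W_{L-1}W_{L-2}\cdots W_1$. $\|\cdot\|_2$ denotes the spectral (operator $\ell_2$) norm of a matrix. *)

(* Defs.v *)
From HB Require Import structures.
From mathcomp Require Import all_boot all_order all_algebra.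
From mathcomp Require Import classical_sets reals.
Set Implicit Arguments. Unset Strict Implicit. Unset Printing Implicit Defensive.
Import Order.TTheory GRing.Theory Num.Theory.
Local Open Scope classical_set_scope.
Local Open Scope ring_scope.

Definition vnorm2 {R : realType} {n : nat} (v : 'cV[R]_n) : R :=
  Num.sqrt (\sum_(i < n) (v i 0) ^+ 2).

Definition opnorm {R : realType} {m n : nat} (A : 'M[R]_(m, n)) : R :=
  sup [set vnorm2 (A *m x) | x in [set x : 'cV[R]_n | vnorm2 x <= 1]].

Fixpoint prodW {R : realType} {d : nat} (W : nat -> 'M[R]_d) (k : nat) : 'M[R]_d :=
  match k with
  | O => 1%:M
  | S k' => W k *m prodW W k'
  end.

Fixpoint mxpow {R : realType} {d : nat} (A : 'M[R]_d) (k : nat) : 'M[R]_d :=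
  match k with
  | O => 1%:M
  | S k' => A *m mxpow A k'
  end.

(* Main.v *)
Require Import Defs.
From HB Require Import structures.
From mathcomp Require Import all_boot all_order all_algebra.
From mathcomp Require Import classical_sets reals.
From mathcomp Require Import ring lra zify.
Import Order.TTheory GRing.Theory Num.Theory.
Local Open Scope ring_scope.
Set Implicit Arguments. Unset Strict Implicit. Unset Printing Implicit Defensive.

Section V.
Variable R : realType.

Definition dot n (u v : 'cV[R]_n) : R := \sum_i u i 0 * v i 0.

Lemma vnorm2E n (v : 'cV[R]_n) : vnorm2 v = Num.sqrt (dot v v).
Proof. by rewrite /vnorm2 /dot; congr Num.sqrt; apply: eq_bigr => i _; rewrite expr2. Qed.

Lemma dot_ge0 n (v : 'cV[R]_n) : 0 <= dot v v.
Proof. by apply: sumr_ge0 => i _; rewrite -expr2 sqr_ge0. Qed.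

Lemma vnorm2_ge0 n (v : 'cV[R]_n) : 0 <= vnorm2 v.
Proof. exact: sqrtr_ge0. Qed.

Lemma vnorm2_sq n (v : 'cV[R]_n) : vnorm2 v ^+ 2 = dot v v.
Proof. by rewrite vnorm2E sqr_sqrtr // dot_ge0. Qed.

Lemma dotC n (u v : 'cV[R]_n) : dot u v = dot v u.
Proof. by apply: eq_bigr => i _; rewrite mulrC. Qed.

Lemma dot_mx n (u v : 'cV[R]_n) : dot u v = (u^T *m v) 0 0.
Proof. by rewrite /dot mxE; apply: eq_bigr => i _; rewrite mxE. Qed.

Lemma dot_tr m n (A : 'M[R]_(m, n)) x y : dot (A^T *m x) y = dot x (A *m y).
Proof. by rewrite !dot_mx trmx_mul trmxK mulmxA. Qed.

Lemma dotDl n (u v w : 'cV[R]_n) : dot (u + v) w = dot u w + dot v w.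
Proof. by rewrite /dot -big_split; apply: eq_bigr => i _; rewrite mxE mulrDl. Qed.

Lemma dotDr n (u v w : 'cV[R]_n) : dot w (u + v) = dot w u + dot w v.
Proof. by rewrite dotC dotDl !(dotC w). Qed.

Lemma cauchy_schwarz n (u v : 'cV[R]_n) : dot u v <= vnorm2 u * vnorm2 v.
Proof.
set s := vnorm2 u; set t := vnorm2 v.
have hs : s ^+ 2 = dot u u by rewrite vnorm2_sq.
have ht : t ^+ 2 = dot v v by rewrite vnorm2_sq.
have key : 0 <= t ^+ 2 * dot u u - 2 * s * t * dot u v + s ^+ 2 * dot v v.
  have -> : t ^+ 2 * dot u u - 2 * s * t * dot u v + s ^+ 2 * dot v v =
            \sum_i (t * u i 0 - s * v i 0) ^+ 2.
    rewrite /dot !mulr_sumr -sumrB -big_split /=; apply: eq_bigr => i _; ring.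
  by apply: sumr_ge0 => i _; rewrite sqr_ge0.
have s0 : 0 <= s by exact: vnorm2_ge0.
have t0 : 0 <= t by exact: vnorm2_ge0.
have [st0|] := ltP 0 (s * t).
  rewrite -hs -ht in key.
  have : 2 * (s * t) * dot u v <= 2 * (s * t) * (s * t) by nra.
  by rewrite ler_pM2l // mulr_gt0.
move=> st0; have : s * t = 0 by apply/eqP; rewrite eq_le st0 mulr_ge0.
move=> /eqP; rewrite mulf_eq0 => /orP [] /eqP z.
- have : dot u u = 0 by rewrite -hs z expr0n.
  move=> /eqP; rewrite /dot psumr_eq0; last by move=> i _; rewrite -expr2 sqr_ge0.
  move=> /allP H.
  rewrite z mul0r big1 // => i _.
  have := H i (mem_index_enum _); rewrite -expr2 sqrf_eq0 => /eqP ->; by rewrite mul0r.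
- have : dot v v = 0 by rewrite -ht z expr0n.
  move=> /eqP; rewrite /dot psumr_eq0; last by move=> i _; rewrite -expr2 sqr_ge0.
  move=> /allP H.
  rewrite z mulr0 big1 // => i _.
  have := H i (mem_index_enum _); rewrite -expr2 sqrf_eq0 => /eqP ->; by rewrite mulr0.
Qed.

Lemma minkowski n (u v : 'cV[R]_n) : vnorm2 (u + v) <= vnorm2 u + vnorm2 v.
Proof.
have h1 := cauchy_schwarz u v.
have s0 := vnorm2_ge0 u; have t0 := vnorm2_ge0 v.
rewrite [X in X <= _]vnorm2E -(ger0_norm (addr_ge0 s0 t0)) -sqrtr_sqr ler_sqrt ?sqr_ge0 //.
rewrite dotDl !dotDr (dotC v u) -!vnorm2_sq; nra.
Qed.

Lemma vnorm2Z n c (v : 'cV[R]_n) : vnorm2 (c *: v) = `|c| * vnorm2 v.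
Proof.
rewrite /vnorm2 -sqrtr_sqr -sqrtrM ?sqr_ge0 // mulr_sumr.
by congr Num.sqrt; apply: eq_bigr => i _; rewrite mxE exprMn.
Qed.

Lemma vnorm2_0 n : vnorm2 (0 : 'cV[R]_n) = 0.
Proof. by rewrite /vnorm2 big1 ?sqrtr0 // => i _; rewrite mxE expr0n. Qed.

Lemma vnorm2N n (v : 'cV[R]_n) : vnorm2 (- v) = vnorm2 v.
Proof. by rewrite -scaleN1r vnorm2Z normrN normr1 mul1r. Qed.

Lemma vnorm2_coord n (v : 'cV[R]_n) i : `|v i 0| <= vnorm2 v.
Proof.
rewrite -sqrtr_sqr ler_sqrt; last by apply: sumr_ge0 => j _; rewrite sqr_ge0.
by rewrite (bigD1 i) //= lerDl; apply: sumr_ge0 => j _; rewrite sqr_ge0.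
Qed.

Lemma vnorm2_l1 n (v : 'cV[R]_n) : vnorm2 v <= \sum_i `|v i 0|.
Proof.
have M0 : 0 <= \sum_i `|v i 0| by apply: sumr_ge0.
rewrite -(ger0_norm M0) -sqrtr_sqr ler_sqrt ?sqr_ge0 // [X in _ <= X]expr2 mulr_suml.
apply: ler_sum => i _; rewrite -[v i 0 ^+ 2]ger0_norm ?sqr_ge0 // normrX expr2 ler_wpM2l //.
by rewrite (bigD1 i) //= lerDl; apply: sumr_ge0.
Qed.

End V.

Local Open Scope classical_set_scope.

Section O.
Variable R : realType.
Variables m n : nat.
Implicit Types A B : 'M[R]_(m, n).

Definition OS A := [set vnorm2 (A *m x) | x in [set x : 'cV[R]_n | vnorm2 x <= 1]].

Lemma OS_ub A : has_ubound (OS A).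
Proof.
exists (\sum_i \sum_j `|A i j|) => y [x /= hx <-].
apply: (le_trans (vnorm2_l1 _)); apply: ler_sum => i _.
rewrite mxE; apply: (le_trans (ler_norm_sum _ _ _)); apply: ler_sum => j _.
rewrite normrM ler_piMr //; exact: le_trans (vnorm2_coord _ _) hx.
Qed.

Lemma OS0 A : OS A 0.
Proof. by exists 0; rewrite /= ?vnorm2_0 ?ler01 // mulmx0 !vnorm2_0. Qed.

Lemma opnorm_ge0 A : 0 <= opnorm A.
Proof. exact: (ub_le_sup (OS_ub A) (OS0 A)). Qed.

Lemma vnorm2_eq0 k (x : 'cV[R]_k) : vnorm2 x = 0 -> x = 0.
Proof.
move=> h; apply/matrixP => i j; rewrite ord1 mxE; apply/eqP.
by rewrite -normr_le0 -h vnorm2_coord.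
Qed.

Lemma opnorm_ub A x : vnorm2 (A *m x) <= opnorm A * vnorm2 x.
Proof.
have [s0|hs] := ltP 0 (vnorm2 x); last first.
  have : vnorm2 x = 0 by apply/eqP; rewrite eq_le hs /= vnorm2_ge0.
  by move=> /vnorm2_eq0 ->; rewrite mulmx0 !vnorm2_0 mulr0.
set s := vnorm2 x in s0 *.
have h1 : vnorm2 (s^-1 *: x) <= 1.
  by rewrite vnorm2Z ger0_norm ?invr_ge0 ?(ltW s0) // mulVf // lt0r_neq0.
have : OS A (vnorm2 (A *m (s^-1 *: x))) by exists (s^-1 *: x).
move=> /(ub_le_sup (OS_ub A)) => /=.
rewrite -scalemxAr vnorm2Z ger0_norm ?invr_ge0 ?(ltW s0) // => h.
by rewrite -ler_pdivrMr // mulrC.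
Qed.

Lemma opnorm_le A c : 0 <= c -> (forall x, vnorm2 (A *m x) <= c * vnorm2 x) -> opnorm A <= c.
Proof.
move=> c0 h; apply: ge_sup; first by exists 0; exact: OS0.
move=> y [x /= hx <-]; apply: (le_trans (h x)).
by rewrite -[X in _ <= X]mulr1 ler_wpM2l.
Qed.

Lemma opnormD A B : opnorm (A + B) <= opnorm A + opnorm B.
Proof.
apply: opnorm_le; first by rewrite addr_ge0 ?opnorm_ge0.
move=> x; rewrite mulmxDl mulrDl; apply: (le_trans (minkowski _ _)).
by rewrite lerD ?opnorm_ub.
Qed.

Lemma opnormN A : opnorm (- A) = opnorm A.
Proof.
have h B : opnorm (- B) <= opnorm B.
  apply: opnorm_le; first exact: opnorm_ge0.
  by move=> x; rewrite mulNmx vnorm2N opnorm_ub.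
by apply/eqP; rewrite eq_le h /= -{1}(opprK A) h.
Qed.

Lemma opnormB A B : opnorm (A - B) = opnorm (B - A).
Proof. by rewrite -opnormN opprB. Qed.

Lemma opnorm0 : opnorm (0 : 'M[R]_(m, n)) = 0.
Proof.
apply/eqP; rewrite eq_le opnorm_ge0 andbT; apply: opnorm_le => // x.
by rewrite mul0mx !vnorm2_0 mul0r.
Qed.

End O.

Lemma opnormM (R : realType) m n p (A : 'M[R]_(m, n)) (B : 'M[R]_(n, p)) :
  opnorm (A *m B) <= opnorm A * opnorm B.
Proof.
apply: opnorm_le; first by rewrite mulr_ge0 ?opnorm_ge0.
move=> x; rewrite -mulmxA -mulrA; apply: (le_trans (opnorm_ub _ _)).
by rewrite ler_wpM2l ?opnorm_ge0 ?opnorm_ub.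
Qed.

Lemma opnorm1 (R : realType) n : opnorm (1%:M : 'M[R]_n) <= 1.
Proof. by apply: opnorm_le => // x; rewrite mul1mx mul1r. Qed.

Lemma opnorm_tr (R : realType) m n (A : 'M[R]_(m, n)) : opnorm A^T <= opnorm A.
Proof.
apply: opnorm_le; first exact: opnorm_ge0.
move=> x; set t := vnorm2 (A^T *m x).
have t0 : 0 <= t := vnorm2_ge0 _.
have h : t ^+ 2 <= vnorm2 x * (opnorm A * t).
  rewrite /t vnorm2_sq dot_tr; apply: (le_trans (cauchy_schwarz _ _)).
  by rewrite ler_wpM2l ?vnorm2_ge0 ?opnorm_ub.
have [tp|] := ltP 0 t; last first.
  by move=> tl; apply: le_trans tl _; rewrite mulr_ge0 ?opnorm_ge0 ?vnorm2_ge0.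
by rewrite -(ler_pM2r tp) -expr2 (le_trans h) // mulrA [vnorm2 x * _]mulrC.
Qed.

Local Close Scope classical_set_scope.
Local Open Scope ring_scope.

Section M.
Variable R : realType.
Variable d : nat.
Implicit Types X Y : 'M[R]_d.

Lemma mxpow_le X a k : opnorm X <= a -> opnorm (mxpow X k) <= a ^+ k.
Proof.
move=> hX; have a0 : 0 <= a := le_trans (opnorm_ge0 _) hX.
elim: k => [|k IH] /=; first by rewrite expr0 opnorm1.
apply: (le_trans (opnormM _ _)); rewrite exprS.
by apply: ler_pM => //; apply: opnorm_ge0.
Qed.

Lemma pow_diff X Y a e k : opnorm X <= a -> opnorm Y <= a -> opnorm (X - Y) <= e ->
  opnorm (mxpow X k - mxpow Y k) <= k%:R * a ^+ k.-1 * e.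
Proof.
move=> hX hY hE; have a0 : 0 <= a := le_trans (opnorm_ge0 _) hX.
have e0 : 0 <= e := le_trans (opnorm_ge0 _) hE.
elim: k => [|k IH] /=; first by rewrite subrr opnorm0 !mul0r.
have -> : X *m mxpow X k - Y *m mxpow Y k =
   X *m (mxpow X k - mxpow Y k) + (X - Y) *m mxpow Y k.
  by rewrite mulmxBr mulmxBl addrA subrK.
apply: (le_trans (opnormD _ _)).
apply: (le_trans (lerD (opnormM _ _) (opnormM _ _))).
have h1 : opnorm X * opnorm (mxpow X k - mxpow Y k) <= a * (k%:R * a ^+ k.-1 * e).
  by apply: ler_pM => //; apply: opnorm_ge0.
have h2 : opnorm (X - Y) * opnorm (mxpow Y k) <= e * a ^+ k.
  by apply: ler_pM => //; [apply: opnorm_ge0|apply: opnorm_ge0|apply: mxpow_le].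
apply: (le_trans (lerD h1 h2)); case: k {IH h1 h2} => [|k] /=.
  by rewrite !expr0 !mulr1 !mul0r mulr0 add0r mul1r.
by rewrite exprS [k.+2%:R]mulrSr le_eqVlt; apply/orP; left; apply/eqP; ring.
Qed.

Lemma mxpow_sandwich (V : 'M[R]_d) k :
  mxpow (V *m V^T) k.+1 = V *m mxpow (V^T *m V) k *m V^T.
Proof.
elim: k => [|k IH] /=; first by rewrite !mulmx1.
rewrite /= in IH; rewrite IH !mulmxA.
by congr (_ *m _); rewrite -!mulmxA.
Qed.

Lemma sandwich_le (V M : 'M[R]_d) :
  opnorm (V *m M *m V^T) <= opnorm V ^+ 2 * opnorm M.
Proof.
apply: (le_trans (opnormM _ _)).
apply: le_trans (ler_pM (opnorm_ge0 _) (opnorm_ge0 _) (opnormM _ _) (opnorm_tr V)) _.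
by rewrite le_eqVlt; apply/orP; left; apply/eqP; ring.
Qed.

End M.


Lemma natid k : (k.+2 * k.+1 = k.+1 * k + 2 * k.+1)%N.
Proof. by rewrite [(2 * _)%N]mulnC -mulnDr addn2 mulnC. Qed.

Unset Implicit Arguments.
Set Strict Implicit.
Theorem lemma5 (R : realType) (d L : nat) (alpha delta : R)
  (W : nat -> 'M[R]_d) :
  (1 <= d)%N -> (2 <= L)%N -> 0 <= alpha -> 0 <= delta ->
  (forall l : nat, (1 <= l <= L.-1)%N -> opnorm (W l) <= alpha) ->
  (forall l : nat, (1 <= l <= L.-2)%N ->
     opnorm ((W l.+1)^T *m W l.+1 - W l *m (W l)^T) <= delta) ->
  opnorm (prodW W (L.-1) *m (prodW W (L.-1))^T
          - mxpow (W (L.-1) *m (W (L.-1))^T) (L.-1))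
    <= (2%:R : R)^-1 * (L%:R) ^+ 2 * alpha ^+ (2 * (L.-2)) * delta.
Proof.
move=> d1 L2 a0 e0 hW hD.
have claim : forall k, (1 <= k <= L.-1)%N ->
  opnorm (prodW W k *m (prodW W k)^T - mxpow (W k *m (W k)^T) k) * 2
    <= (k * k.-1)%:R * alpha ^+ (2 * k.-1) * delta.
  elim=> [//|[|k] IH] hk.
    by rewrite /= !mulmx1 subrr opnorm0 mul0r !mul0r.
  have hk' : (1 <= k.+1 <= L.-1)%N by move: hk => /andP [_ h]; rewrite /= ltnW.
  have {}IH := IH hk'.
  set V := W k.+2; set P := prodW W k.+1.
  set A := W k.+1 *m (W k.+1)^T; set B := V^T *m V.
  have hV : opnorm V <= alpha by apply: hW.
  have hA : opnorm A <= alpha ^+ 2.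
    apply: le_trans (opnormM _ _) _; rewrite expr2.
    apply: ler_pM; rewrite ?opnorm_ge0 //; first exact: hW.
    exact: le_trans (opnorm_tr _) (hW _ hk').
  have hB : opnorm B <= alpha ^+ 2.
    apply: le_trans (opnormM _ _) _; rewrite expr2.
    by apply: ler_pM; rewrite ?opnorm_ge0 //; apply: le_trans (opnorm_tr _) hV.
  have hAB : opnorm (A - B) <= delta.
    rewrite opnormB; apply: hD.
    move: hk => /andP [_ h]; apply/andP; split => //.
    by rewrite -ltnS; apply: leq_trans h _; case: (L) => [|[|L']].
  have hF := pow_diff k.+1 hA hB hAB.
  set E := opnorm (P *m P^T - mxpow A k.+1) in IH.
  set F := opnorm (mxpow A k.+1 - mxpow B k.+1) in hF.
  have eq1 : prodW W k.+2 *m (prodW W k.+2)^T - mxpow (W k.+2 *m (W k.+2)^T) k.+2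
     = V *m ((P *m P^T - mxpow A k.+1) + (mxpow A k.+1 - mxpow B k.+1)) *m V^T.
    rewrite addrA subrK mxpow_sandwich /= -/V -/P trmx_mul !mulmxA.
    by rewrite mulmxBr mulmxBl !mulmxA.
  rewrite eq1.
  have h1 := sandwich_le V ((P *m P^T - mxpow A k.+1) + (mxpow A k.+1 - mxpow B k.+1)).
  have h2 := opnormD (P *m P^T - mxpow A k.+1) (mxpow A k.+1 - mxpow B k.+1).
  rewrite -/E -/F in h2.
  have hVa : opnorm V ^+ 2 <= alpha ^+ 2 by rewrite lerXn2r // ?nnegrE ?opnorm_ge0.
  have E0 : 0 <= E by apply: opnorm_ge0.
  have F0 : 0 <= F by apply: opnorm_ge0.
  have h3 : opnorm (V *m (P *m P^T - mxpow A k.+1 + (mxpow A k.+1 - mxpow B k.+1)) *m V^T)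
     <= alpha ^+ 2 * (E + F).
    apply: (le_trans h1); apply: ler_pM => //; rewrite ?exprn_ge0 ?opnorm_ge0 //.
  apply: le_trans (ler_wpM2r (ler0n _ 2) h3) _.
  move: IH hF; rewrite /= !exprM.
  set q := (alpha ^+ 2) ^+ k => IH hF.
  have q0 : 0 <= q by rewrite exprn_ge0 // exprn_ge0.
  have -> : ((k.+2 * k.+1)%:R : R) = (k.+1 * k)%:R + 2 * k.+1%:R.
    rewrite -natrM -natrD; by rewrite natid.
  rewrite [(alpha ^+ 2) ^+ k.+1]exprS -/q.
  set c := (k.+1 * k)%:R in IH *; set c2 := k.+1%:R in hF *.
  have h4 : (E + F) * 2 <= (c + 2 * c2) * q * delta.
    have -> : (c + 2 * c2) * q * delta = c * q * delta + 2 * (c2 * q * delta) by ring.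
    rewrite mulrDl; apply: lerD => //; rewrite mulrC; apply: ler_wpM2l => //.
  have -> : (c + 2 * c2) * (alpha ^+ 2 * q) * delta = alpha ^+ 2 * ((c + 2 * c2) * q * delta) by ring.
  by rewrite -[alpha ^+ 2 * (E + F) * 2]mulrA ler_wpM2l // exprn_ge0.
have hk : (1 <= L.-1 <= L.-1)%N by rewrite leqnn andbT; case: (L) L2 => [|[|]].
have := claim _ hk.
set X := opnorm _; set p := alpha ^+ _ => h.
have p0 : 0 <= p * delta by rewrite mulr_ge0 // exprn_ge0.
have hn : ((L.-1 * L.-2)%:R : R) <= L%:R ^+ 2.
  rewrite -natrX ler_nat leq_mul // ?leq_pred //.
  exact: leq_trans (leq_pred _) (leq_pred _).
have h' : X * 2 <= L%:R ^+ 2 * (p * delta).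
  by apply: le_trans h _; rewrite -mulrA ler_wpM2r.
rewrite -[_ * _ * p * delta]mulrA -[_ * _ * (p * delta)]mulrA; set Y := L%:R ^+ 2 * (p * delta) in h' *.
lra.
Qed.
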